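(* The Drury-Arveson shift $DA=(T_1,T_2)$ is not semi-hyponormal.
   Context: $DA$ is the 2-variable weighted shift on $\ell^2(\mathbb{Z}_+^2)$ (orthonormal basis $\{e_{\mathbf{k}}\}$) given by $T_1e_{(k_1,k_2)}=\sqrt{\frac{k_1+1}{k_1+k_2+1}}\,e_{(k_1+1,k_2)}$ and $T_2e_{(k_1,k_2)}=\sqrt{\frac{k_2+1}{k_1+k_2+1}}\,e_{(k_1,k_2+1)}$. For a commuting pair $(T_1,T_2)$ let $L=\begin{pmatrix} T_1^*T_1 & T_2^*T_1\\ T_1^*T_2 & T_2^*T_2\end{pmatrix}$ and $R=\begin{pmatrix} T_1T_1^* & T_1T_2^*\\ T_2T_1^* & T_2T_2^*\end{pmatrix}$ acting on $\mathcal{H}\oplus\mathcal{H}$; the pair is semi-hyponormal if $L\ge0$ and $\sqrt{L}\ge\sqrt{R}$ (positive square roots). *)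

(* Defs.v *)
From HB Require Import structures.
From mathcomp Require Import all_boot all_order all_algebra.
From mathcomp Require Import complex.
From mathcomp Require Import classical_sets reals constructive_ereal ereal esum.
Set Implicit Arguments. Unset Strict Implicit. Unset Printing Implicit Defensive.
Import Order.TTheory GRing.Theory Num.Theory.
Local Open Scope ring_scope.

Section Hilbert.
Variables (R : realType) (K : choiceType).

Definition sqmod (z : R[i]) : R := complex.Re z ^+ 2 + complex.Im z ^+ 2.

Definition sqnorm (x : K -> R[i]) : \bar R :=
  (\esum_(k in setT) (sqmod (x k))%:E)%E.

Definition l2 (x : K -> R[i]) : Prop := (sqnorm x < +oo)%E.

Definition rsum (f : K -> R) : R :=
  fine (\esum_(k in setT) (Num.max (f k) 0)%:E)%E
  - fine (\esum_(k in setT) (Num.max (- f k) 0)%:E)%E.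

Definition ip (x y : K -> R[i]) : R[i] :=
  (rsum (fun k => complex.Re (x k * (y k)^*))
   +i* rsum (fun k => complex.Im (x k * (y k)^*)))%C.

Definition op := (K -> R[i]) -> (K -> R[i]).

Definition bounded_op (A : op) : Prop :=
  [/\ (forall (a : R[i]) x y, l2 x -> l2 y ->
         A (fun k => a * x k + y k) = (fun k => a * A x k + A y k)),
      (forall x, l2 x -> l2 (A x)) &
      exists M : R, forall x, l2 x -> (sqnorm (A x) <= M%:E * sqnorm x)%E].

Definition op_eq (A B : op) : Prop := forall x, l2 x -> A x = B x.

Definition adjoint (A B : op) : Prop :=
  bounded_op B /\ forall x y, l2 x -> l2 y -> ip (A x) y = ip x (B y).

Definition pos_op (A : op) : Prop :=
  bounded_op A /\ forall x, l2 x -> 0 <= ip (A x) x.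

Definition op_le (A B : op) : Prop := pos_op (fun x k => B x k - A x k).

Definition is_psqrt (S A : op) : Prop := pos_op S /\ op_eq (S \o S) A.

End Hilbert.

Definition I2 := (nat * nat)%type.

(* 2x2 operator matrix on H (+) H, with H (+) H identified with l^2(bool * I2)%type:
   the first summand is indexed by false, the second by true. *)
Definition block2 (R : realType) (A11 A12 A21 A22 : op R I2) : op R (bool * I2)%type :=
  fun z j =>
    let z1 := fun k => z (false, k) in
    let z2 := fun k => z (true, k) in
    if j.1 then A21 z1 j.2 + A22 z2 j.2 else A11 z1 j.2 + A12 z2 j.2.

Definition semi_hyponormal (R : realType) (T1 T2 : op R I2) : Prop :=
  forall T1s T2s : op R I2, adjoint T1 T1s -> adjoint T2 T2s ->
  let Lop := block2 (T1s \o T1) (T2s \o T1) (T1s \o T2) (T2s \o T2) in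
  let Rop := block2 (T1 \o T1s) (T1 \o T2s) (T2 \o T1s) (T2 \o T2s) in
  pos_op Lop /\
  forall SL SR : op R (bool * I2)%type,
    is_psqrt SL Lop -> is_psqrt SR Rop -> op_le SR SL.

(* Drury-Arveson 2-shift:
   T1 e_(k1,k2) = sqrt((k1+1)/(k1+k2+1)) e_(k1+1,k2),
   T2 e_(k1,k2) = sqrt((k2+1)/(k1+k2+1)) e_(k1,k2+1),
   written coordinatewise on families x : I2 -> C. *)
Definition DA1 (R : realType) : op R I2 :=
  fun x k => if k.1 is n.+1 then
      ((Num.sqrt ((n.+1)%:R / (n.+1 + k.2)%:R : R))%:C)%C * x (n, k.2)
    else 0.

Definition DA2 (R : realType) : op R I2 :=
  fun x k => if k.2 is n.+1 then
      ((Num.sqrt ((n.+1)%:R / (k.1 + n.+1)%:R : R))%:C)%C * x (k.1, n)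
    else 0.

(* Main.v *)
Require Import Defs.
From HB Require Import structures.
From mathcomp Require Import all_boot all_order all_algebra.
From mathcomp Require Import complex.
From mathcomp Require Import classical_sets reals constructive_ereal ereal esum.
From mathcomp Require Import boolp.
From mathcomp Require Import ring lra zify.
Set Implicit Arguments. Unset Strict Implicit. Unset Printing Implicit Defensive.
Import Order.TTheory GRing.Theory Num.Theory.
Local Open Scope ring_scope.
Section RS.
Variables (R : realType).

Section K.
Variable K : choiceType.
Implicit Types (f g a b : K -> R).
Definition E (f : K -> R) : \bar R := (\esum_(k in setT) (f k)%:E)%E.
Definition pp (f : K -> R) := fun k => Num.max (f k) 0.
Definition nn (f : K -> R) := fun k => Num.max (- f k) 0.
Definition absum (f : K -> R) := (E (fun k => `|f k|%R) < +oo)%E.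

Lemma E_ge0 f : (forall k, 0 <= f k) -> (0 <= E f)%E.
Proof. by move=> h; apply: esum_ge0 => k _; rewrite lee_fin. Qed.

Lemma E_le f g : (forall k, f k <= g k) -> (E f <= E g)%E.
Proof. by move=> h; apply: le_esum => k _; rewrite lee_fin. Qed.

Lemma E_D f g : (forall k, 0 <= f k) -> (forall k, 0 <= g k) ->
  E (fun k => f k + g k) = (E f + E g)%E.
Proof.
by move=> hf hg; rewrite /E -esumD // => k _; rewrite lee_fin.
Qed.

Lemma E0 f : (forall k, f k = 0) -> E f = 0%E.
Proof. by move=> h; rewrite /E esum1 // => k _; rewrite h. Qed.

Lemma E_sub (A : set K) f : (forall k, 0 <= f k) ->
  (\esum_(k in A) (f k)%:E <= E f)%E.
Proof.
move=> h; rewrite /E (esum_mkcond A) ; apply: le_esum => k _.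
by case: ifP => _ //; rewrite lee_fin.
Qed.

Lemma E_restr (A : set K) f : (forall k, ~ A k -> f k = 0) ->
  E f = (\esum_(k in A) (f k)%:E)%E.
Proof.
move=> h; rewrite /E (esum_mkcond A); apply: eq_esum => k _.
case: ifP => // /negbT; rewrite notin_setE => /h ->; done.
Qed.

Lemma E_pt (a : K) f : (forall k, k <> a -> f k = 0) -> 0 <= f a -> E f = (f a)%:E.
Proof.
move=> h h0; rewrite (E_restr (A := [set a])); first by rewrite esum_set1.
by move=> k /= /h.
Qed.

Lemma fin_E f : (forall k, 0 <= f k) -> (E f < +oo)%E -> E f = (fine (E f))%:E.
Proof.
move=> h0 h; rewrite fineK // ge0_fin_numE //; exact: E_ge0.
Qed.

Lemma maxE0 (x : R) : Num.max x 0 = if x < 0 then 0 else x.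
Proof. by []. Qed.
Lemma pp_ge0 f k : 0 <= pp f k.
Proof. by rewrite /pp maxE0; case: ifP => h //; lra. Qed.
Lemma nn_ge0 f k : 0 <= nn f k.
Proof. by rewrite /nn maxE0; case: ifP => h //; lra. Qed.
Lemma ppnn f k : f k = pp f k - nn f k.
Proof. by rewrite /pp /nn !maxE0; case: ifP; case: ifP => ? ?; lra. Qed.
Lemma pp_le f k : pp f k <= `|f k|.
Proof.
have := ler_norm (f k); have := normr_ge0 (f k).
by rewrite /pp maxE0; case: ifP => ? ? ?; lra.
Qed.
Lemma nn_le f k : nn f k <= `|f k|.
Proof.
have := ler_norm (- f k); have := normr_ge0 (f k); rewrite normrN.
by rewrite /nn maxE0; case: ifP => ? ? ?; lra.
Qed.
Lemma pp0 f k : f k = 0 -> pp f k = 0.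
Proof. by rewrite /pp maxE0 => ->; rewrite ltxx. Qed.
Lemma nn0 f k : f k = 0 -> nn f k = 0.
Proof. by rewrite /nn maxE0 => ->; rewrite oppr0 ltxx. Qed.

Lemma rsumE f : rsum f = fine (E (pp f)) - fine (E (nn f)).
Proof. by []. Qed.

Lemma rsum_split f a b : (forall k, 0 <= a k) -> (forall k, 0 <= b k) ->
  (E a < +oo)%E -> (E b < +oo)%E -> (forall k, f k = a k - b k) ->
  rsum f = fine (E a) - fine (E b).
Proof.
move=> ha hb fa fb hf.
have key : forall k, pp f k + b k = nn f k + a k.
  move=> k; have := ppnn f k; rewrite hf => e; lra.
have e1 : E (fun k => pp f k + b k) = E (fun k => nn f k + a k).
  by congr E; apply: funext => k; rewrite key.
rewrite !E_D // in e1; try exact: pp_ge0; try exact: nn_ge0.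
have fp : (E (pp f) < +oo)%E.
  apply: le_lt_trans fa; apply: E_le => k; rewrite /pp ge_max ha andbT.
  by rewrite hf lerBlDr lerDl hb.
have fn : (E (nn f) < +oo)%E.
  apply: le_lt_trans fb; apply: E_le => k; rewrite /nn ge_max hb andbT.
  by rewrite hf opprB lerBlDr lerDl ha.
have e2 : fine (E (pp f)) + fine (E b) = fine (E (nn f)) + fine (E a).
  apply: EFin_inj; rewrite !EFinD -(fin_E ha fa) -(fin_E hb fb).
  by rewrite -(fin_E (@pp_ge0 f) fp) -(fin_E (@nn_ge0 f) fn).
rewrite rsumE; lra.
Qed.

Lemma absum_pp f : absum f -> (E (pp f) < +oo)%E.
Proof. by move=> h; apply: le_lt_trans h; apply: E_le => k; exact: pp_le. Qed.
Lemma absum_nn f : absum f -> (E (nn f) < +oo)%E.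
Proof. by move=> h; apply: le_lt_trans h; apply: E_le => k; exact: nn_le. Qed.

Lemma rsumD f g : absum f -> absum g ->
  rsum (fun k => f k + g k) = rsum f + rsum g.
Proof.
move=> hf hg.
rewrite (@rsum_split _ (fun k => pp f k + pp g k) (fun k => nn f k + nn g k)).
- have fpf := absum_pp hf; have fpg := absum_pp hg.
  have fnf := absum_nn hf; have fng := absum_nn hg.
  rewrite !E_D; try (move=> k; exact: pp_ge0); try (move=> k; exact: nn_ge0).
  rewrite (fin_E (@pp_ge0 f) fpf) (fin_E (@pp_ge0 g) fpg).
  rewrite (fin_E (@nn_ge0 f) fnf) (fin_E (@nn_ge0 g) fng) -!EFinD /=.
  rewrite !rsumE; lra.
- by move=> k; rewrite addr_ge0 // pp_ge0.
- by move=> k; rewrite addr_ge0 // nn_ge0.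
- rewrite E_D; try (move=> k; exact: pp_ge0).
  by rewrite lte_add_pinfty //; apply: absum_pp.
- rewrite E_D; try (move=> k; exact: nn_ge0).
  by rewrite lte_add_pinfty //; apply: absum_nn.
- by move=> k; rewrite (ppnn f k) (ppnn g k); lra.
Qed.

Lemma rsum_ge0 f : (forall k, 0 <= f k) -> 0 <= rsum f.
Proof.
move=> h; rewrite rsumE (E0 (f := nn f)) /= ?subr0; first by apply: fine_ge0; apply: E_ge0 => k; exact: pp_ge0.
by move=> k; rewrite /nn maxE0; case: ifP => // /negbT; rewrite -leNgt => h2; have := h k; lra.
Qed.

Lemma rsum0 f : (forall k, f k = 0) -> rsum f = 0.
Proof.
move=> h; rewrite rsumE !E0 /= ?subrr // => k; [exact: nn0 | exact: pp0].
Qed.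

Lemma rsum_pt (a : K) f : (forall k, k <> a -> f k = 0) -> rsum f = f a.
Proof.
move=> h; rewrite rsumE (E_pt (a := a)) ?pp_ge0 //; last first.
  by move=> k /h /pp0.
rewrite (E_pt (a := a)) ?nn_ge0 //; last first.
  by move=> k /h /nn0.
by rewrite /= -ppnn.
Qed.

Lemma absum_le f g : absum f -> (forall k, `|g k| <= `|f k|) -> absum g.
Proof. by move=> h hl; apply: le_lt_trans h; apply: E_le. Qed.

Lemma absumD f g : absum f -> absum g -> absum (fun k => f k + g k).
Proof.
move=> hf hg; rewrite /absum; apply: (@le_lt_trans _ _ (E (fun k => `|f k| + `|g k|))).
  by apply: E_le => k; exact: ler_normD.
by rewrite E_D // lte_add_pinfty.
Qed.

End K.

Section Reindex.
Variables (K K' : choiceType) (e : K' -> K).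
Hypothesis einj : injective e.
Implicit Types (f : K -> R).

Lemma E_reindex f : (forall k, ~ range e k -> f k = 0) -> (forall k, 0 <= f k) ->
  E f = E (fun k => f (e k)).
Proof.
move=> h h0; rewrite (E_restr h) /E (esum_image setT e (fun k => (f k)%:E)) //.
by move=> x y _ _; apply: einj.
Qed.

Lemma E_comp_le f : (forall k, 0 <= f k) -> (E (fun k => f (e k)) <= E f)%E.
Proof.
move=> h0; rewrite /E -(esum_image setT e (fun k => (f k)%:E)); first exact: E_sub.
by move=> x y _ _; apply: einj.
Qed.

Lemma rsum_reindex f : (forall k, ~ range e k -> f k = 0) ->
  rsum f = rsum (fun k => f (e k)).
Proof.
move=> h; rewrite !rsumE (E_reindex (f := pp f)); last exact: pp_ge0.
  rewrite (E_reindex (f := nn f)) //; last exact: nn_ge0.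
  by move=> k /h /nn0.
by move=> k /h /pp0.
Qed.

Lemma absum_comp f : absum f -> absum (fun k => f (e k)).
Proof. by move=> h; apply: le_lt_trans h; apply: (E_comp_le (f := fun k => `|f k|)). Qed.
End Reindex.

Lemma rsum_bool (K : choiceType) (f : bool * K -> R) : absum f ->
  rsum f = rsum (fun k => f (false, k) + f (true, k)).
Proof.
move=> hf.
pose f1 := fun j : bool * K => if j.1 then 0 else f j.
pose f2 := fun j : bool * K => if j.1 then f j else 0.
have a1 : absum f1.
  apply: (absum_le hf) => -[[]] k; rewrite /f1 //= normr0 //.
have a2 : absum f2.
  apply: (absum_le hf) => -[[]] k; rewrite /f2 //= normr0 //.
have -> : rsum f = rsum (fun j => f1 j + f2 j).
  by congr rsum; apply: funext => -[[]] k; rewrite /f1 /f2 /= ?addr0 ?add0r.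
rewrite (rsumD a1 a2).
rewrite (@rsum_reindex _ _ (fun k => (false, k)) _ f1); last 2 first.
- by move=> x y [].
- move=> [[] k] //= h; exfalso; apply: h; by exists k.
rewrite (@rsum_reindex _ _ (fun k => (true, k)) _ f2); last 2 first.
- by move=> x y [].
- move=> [[] k] //= h; exfalso; apply: h; by exists k.
rewrite -rsumD //.
- by apply: (absum_comp (e := fun k => (false, k))) a1 => x y [].
- by apply: (absum_comp (e := fun k => (true, k))) a2 => x y [].
Qed.

End RS.
Local Open Scope complex_scope.
Section CS.
Variable R : realType.
Local Notation C := R[i].

Lemma sqmod_ge0 (z : C) : 0 <= sqmod z.
Proof. by rewrite /sqmod addr_ge0 // sqr_ge0. Qed.

Lemma sqmodM (z w : C) : sqmod (z * w) = sqmod z * sqmod w.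
Proof. by case: z => a b; case: w => c d; simpc; rewrite /sqmod /=; ring. Qed.

Lemma sqmodD (z w : C) : sqmod (z + w) <= (sqmod z + sqmod z) + (sqmod w + sqmod w).
Proof.
case: z => a b; case: w => c d; simpc; rewrite /sqmod /=.
have := sqr_ge0 (a - c); have := sqr_ge0 (b - d); rewrite !expr2 => ? ?; nra.
Qed.

Lemma sqmod0 : sqmod (0 : C) = 0.
Proof. by rewrite /sqmod /= expr0n /= addr0. Qed.

Lemma sqmod_real (r : R) : sqmod r%:C = r ^+ 2.
Proof. by rewrite /sqmod /= expr0n /= addr0. Qed.

Section K.
Variable K : choiceType.
Implicit Types (h : K -> C) (x y : K -> C).

Definition csum h : C := (rsum (fun k => complex.Re (h k)) +i* rsum (fun k => complex.Im (h k)))%C.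
Definition cs h := absum (fun k => complex.Re (h k)) /\ absum (fun k => complex.Im (h k)).

Lemma ipE x y : ip x y = csum (fun k => x k * (y k)^*).
Proof. by []. Qed.

Lemma csumD h1 h2 : cs h1 -> cs h2 -> csum (fun k => h1 k + h2 k) = csum h1 + csum h2.
Proof.
move=> [a1 b1] [a2 b2]; rewrite /csum.
have -> : (fun k => complex.Re (h1 k + h2 k)) = (fun k => complex.Re (h1 k) + complex.Re (h2 k)).
  by apply: funext => k; rewrite raddfD.
have -> : (fun k => complex.Im (h1 k + h2 k)) = (fun k => complex.Im (h1 k) + complex.Im (h2 k)).
  by apply: funext => k; rewrite raddfD.
by rewrite !rsumD //; simpc.
Qed.

Lemma csum_pt (a : K) h : (forall k, k <> a -> h k = 0) -> csum h = h a.
Proof.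
move=> H; rewrite /csum (rsum_pt (a := a)); last by move=> k /H ->.
rewrite (rsum_pt (a := a)); last by move=> k /H ->.
by case: (h a).
Qed.

Lemma csum_ge0 h : (forall k, 0 <= h k) -> 0 <= csum h.
Proof.
move=> H; rewrite /csum (rsum0 (f := fun k => complex.Im (h k))); last first.
  by move=> k /=; have := H k; rewrite lecE => /andP[/eqP -> _].
rewrite lecE /= eqxx /=; apply: rsum_ge0 => k.
by have := H k; rewrite lecE => /andP[_].
Qed.

Lemma cs_add h1 h2 : cs h1 -> cs h2 -> cs (fun k => h1 k + h2 k).
Proof.
move=> [a1 b1] [a2 b2]; split.
  have -> : (fun k => complex.Re (h1 k + h2 k)) = (fun k => complex.Re (h1 k) + complex.Re (h2 k)).
    by apply: funext => k; rewrite raddfD.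
  exact: absumD.
have -> : (fun k => complex.Im (h1 k + h2 k)) = (fun k => complex.Im (h1 k) + complex.Im (h2 k)).
  by apply: funext => k; rewrite raddfD.
exact: absumD.
Qed.

Lemma cs_pt (a : K) h : (forall k, k <> a -> h k = 0) -> cs h.
Proof.
move=> H; split; rewrite /absum (E_pt (a := a)) ?ltry // => k /H ->; by rewrite normr0.
Qed.

Lemma cs_l2 x y : l2 x -> l2 y -> cs (fun k => x k * (y k)^*).
Proof.
move=> hx hy.
have hb : (E (fun k => (sqmod (x k) + sqmod (y k))%R) < +oo)%E.
  by rewrite E_D; [rewrite lte_add_pinfty | move=> k; exact: sqmod_ge0 | move=> k; exact: sqmod_ge0].
split; apply: le_lt_trans hb; apply: E_le => k; rewrite /sqmod;
  case: (x k) => a b; case: (y k) => c d; simpc; rewrite /=;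
  have := sqr_ge0 (a - c); have := sqr_ge0 (b - d);
  have := sqr_ge0 (a + c); have := sqr_ge0 (b + d);
  have := sqr_ge0 (a - d); have := sqr_ge0 (b - c);
  have := sqr_ge0 (a + d); have := sqr_ge0 (b + c);
  rewrite !expr2 => *; rewrite ler_norml; apply/andP; split; nra.
Qed.

Lemma sqnorm_ge0 x : (0 <= sqnorm x)%E.
Proof. apply: E_ge0 => k; exact: sqmod_ge0. Qed.

Lemma sqnorm_fin x : l2 x -> sqnorm x = (fine (sqnorm x))%:E.
Proof. by move=> h; rewrite fineK // ge0_fin_numE // sqnorm_ge0. Qed.

Lemma sn_ge0 x : 0 <= fine (sqnorm x).
Proof. exact/fine_ge0/sqnorm_ge0. Qed.

Lemma sqnorm_add_le x y : l2 x -> l2 y ->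
  (sqnorm (fun k => (x k + y k)%R) <= (2 * (fine (sqnorm x) + fine (sqnorm y)))%:E)%E.
Proof.
move=> hx hy.
apply: (@le_trans _ _ (E (fun k => (sqmod (x k) + sqmod (x k)) + (sqmod (y k) + sqmod (y k))))).
  apply: E_le => k; exact: sqmodD.
have g := sqmod_ge0.
rewrite E_D; try (move=> k; by rewrite addr_ge0).
rewrite (@E_D _ _ (fun k => sqmod (x k)) (fun k => sqmod (x k))) // .
rewrite (@E_D _ _ (fun k => sqmod (y k)) (fun k => sqmod (y k))) // .
have fx : E (fun k => sqmod (x k)) = (fine (sqnorm x))%:E := sqnorm_fin hx.
have fy : E (fun k => sqmod (y k)) = (fine (sqnorm y))%:E := sqnorm_fin hy.
by rewrite fx fy -!EFinD lee_fin; lra.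
Qed.

Lemma l2_add x y : l2 x -> l2 y -> l2 (fun k => x k + y k).
Proof. by move=> hx hy; apply: le_lt_trans (sqnorm_add_le hx hy) _; rewrite ltry. Qed.

End K.

Section Reindex.
Variables (K K' : choiceType) (e : K' -> K).
Hypothesis einj : injective e.

Lemma csum_reindex (h : K -> C) : (forall k, ~ range e k -> h k = 0) ->
  csum h = csum (fun k => h (e k)).
Proof.
move=> H.
have h1 := @rsum_reindex _ _ _ e einj (fun k => complex.Re (h k)).
have h2 := @rsum_reindex _ _ _ e einj (fun k => complex.Im (h k)).
rewrite /csum h1 ?h2 // => k /H ->; done.
Qed.

Lemma cs_comp (h : K -> C) : cs h -> cs (fun k => h (e k)).
Proof.
move=> [a b]; split.
  exact: (@absum_comp _ _ _ e einj (fun k => complex.Re (h k))).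
exact: (@absum_comp _ _ _ e einj (fun k => complex.Im (h k))).
Qed.

Lemma sqnorm_comp_le (x : K -> C) : (sqnorm (fun k => x (e k)) <= sqnorm x)%E.
Proof. apply: (@E_comp_le _ _ _ e einj (fun k => sqmod (x k))) => k; exact: sqmod_ge0. Qed.
End Reindex.

Lemma csum_bool (K : choiceType) (h : bool * K -> C) : cs h ->
  csum h = csum (fun k => h (false, k) + h (true, k)).
Proof.
move=> [a b]; rewrite /csum (rsum_bool a) (rsum_bool b).
by congr (_ +i* _); congr rsum; apply: funext => k; rewrite raddfD.
Qed.

End CS.
Section Bnd.
Variable R : realType.
Local Notation C := R[i].

Definition bnd (K K' : choiceType) (A : (K' -> C) -> (K -> C)) : Prop :=
  [/\ (forall (a : C) x y, l2 x -> l2 y ->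
         A (fun k => a * x k + y k) = (fun k => a * A x k + A y k)),
      (forall x, l2 x -> l2 (A x)) &
      exists M : R, forall x, l2 x -> (sqnorm (A x) <= M%:E * sqnorm x)%E].

Lemma bnd_bounded (K : choiceType) (A : op R K) : bnd A -> bounded_op A.
Proof. by []. Qed.

Section KK.
Variables (K K' : choiceType).
Implicit Types (A : (K' -> C) -> (K -> C)).

Lemma mk_bnd A :
  (forall (a : C) x y, l2 x -> l2 y ->
         A (fun k => a * x k + y k) = (fun k => a * A x k + A y k)) ->
  (exists M : R, forall x, l2 x -> (sqnorm (A x) <= (M * fine (sqnorm x))%:E)%E) ->
  bnd A.
Proof.
move=> hl [M hM]; split => //.
  by move=> x hx; apply: le_lt_trans (hM x hx) _; rewrite ltry.
by exists M => x hx; rewrite (sqnorm_fin hx) -EFinM; apply: hM.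
Qed.

Lemma bnd_real A : bnd A -> exists M : R, forall x, l2 x ->
  fine (sqnorm (A x)) <= M * fine (sqnorm x).
Proof.
move=> [_ hl [M hM]]; exists M => x hx; have hAx := hl x hx.
have := hM x hx; rewrite (sqnorm_fin hAx) (sqnorm_fin hx) -EFinM lee_fin /=.
done.
Qed.

Lemma bnd_l2 A x : bnd A -> l2 x -> l2 (A x).
Proof. by move=> [_ h _]; apply: h. Qed.

Lemma bnd_lin A (a : C) x y : bnd A -> l2 x -> l2 y ->
  A (fun k => a * x k + y k) = (fun k => a * A x k + A y k).
Proof. by move=> [h _ _]; apply: h. Qed.

Lemma bnd_ws (c : K -> C) (s : K -> K') :
  (forall k, sqmod (c k) <= 1) ->
  (forall k k', c k != 0 -> c k' != 0 -> s k = s k' -> k = k') ->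
  bnd (fun x k => c k * x (s k)).
Proof.
move=> hc hinj; apply: mk_bnd.
  by move=> a x y _ _; apply: funext => k; ring.
exists 1 => x hx; rewrite mul1r -(sqnorm_fin hx).
apply: (@le_trans _ _ (E (fun k => if c k == 0 then 0 else sqmod (x (s k))))).
  apply: E_le => k; case: eqP => [->|/eqP ck]; first by rewrite mul0r sqmod0.
  rewrite sqmodM; have := hc k; have := sqmod_ge0 (x (s k)); have := sqmod_ge0 (c k).
  move=> *; nra.
rewrite (E_restr (A := [set k | c k != 0])); last first.
  by move=> k /=; case: eqP => // /eqP h /(_ h).
have -> : (\esum_(k in [set k | c k != 0%R]) (if c k == 0%R then 0%R else sqmod (x (s k)))%:E =
   \esum_(k in [set k | c k != 0%R]) (sqmod (x (s k)))%:E)%E.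
  by apply: eq_esum => k /= /negbTE ->.
rewrite -(esum_image _ s (fun j => (sqmod (x j))%:E)); last first.
  move=> k kk /= h1 h2; apply: hinj; by move: h1 h2; rewrite !inE.
exact: (@E_sub _ _ _ (fun k => sqmod (x k)) (fun k => sqmod_ge0 (x k))).
Qed.

Lemma bnd_add A B : bnd A -> bnd B -> bnd (fun x k => A x k + B x k).
Proof.
move=> hA hB; apply: mk_bnd.
  move=> a x y hx hy; rewrite (bnd_lin a hA hx hy) (bnd_lin a hB hx hy).
  by apply: funext => k; ring.
have [MA hMA] := bnd_real hA; have [MB hMB] := bnd_real hB.
exists (2 * (MA + MB)) => x hx.
apply: le_trans (sqnorm_add_le (bnd_l2 hA hx) (bnd_l2 hB hx)) _.
by rewrite lee_fin; have := hMA x hx; have := hMB x hx; lra.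
Qed.

End KK.

Lemma bnd_comp (K K' K'' : choiceType) (A : (K' -> C) -> (K -> C)) (B : (K'' -> C) -> (K' -> C)) :
  bnd A -> bnd B -> bnd (fun x => A (B x)).
Proof.
move=> hA hB; apply: mk_bnd.
  move=> a x y hx hy; rewrite (bnd_lin a hB hx hy).
  by rewrite (bnd_lin a hA (bnd_l2 hB hx) (bnd_l2 hB hy)).
have [MA hMA] := bnd_real hA; have [MB hMB] := bnd_real hB.
exists (`|MA| * `|MB|) => x hx.
have hBx := bnd_l2 hB hx; have hABx := bnd_l2 hA hBx.
rewrite (sqnorm_fin hABx) lee_fin.
have h1 := hMA _ hBx; have h2 := hMB _ hx.
have g1 := sn_ge0 (B x); have g2 := sn_ge0 x; have g3 := sn_ge0 (A (B x)).
have a1 := ler_norm MA; have a2 := ler_norm MB; have a3 := normr_ge0 MA.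
have p1 := ler_wpM2r g1 a1; have p2 := ler_wpM2l a3 h2.
have p3 := ler_wpM2l a3 (ler_wpM2r g2 a2).
rewrite -mulrA; lra.
Qed.

End Bnd.
Section Concrete.
Variable R : realType.
Local Notation C := R[i].
Local Notation J := (bool * I2)%type.

Lemma ipD (K : choiceType) (u v z : K -> C) : l2 u -> l2 v -> l2 z ->
  ip (fun k => u k + v k) z = ip u z + ip v z.
Proof.
move=> hu hv hz; rewrite !ipE -csumD; try exact: cs_l2.
by congr csum; apply: funext => k; rewrite mulrDl.
Qed.

Lemma sqrC2 (q : R) : 0 <= q -> (Num.sqrt q)%:C * (Num.sqrt q)%:C = q%:C.
Proof. by move=> h; rewrite -rmorphM -expr2 sqr_sqrtr. Qed.

Lemma ratio_ge0 (a b : nat) : 0 <= (a%:R / b%:R : R).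
Proof. by rewrite divr_ge0 // ler0n. Qed.

Lemma ratio_le1 (a b : nat) : (a <= b)%N -> (a%:R / b%:R : R) <= 1.
Proof.
move=> h; case: (posnP b) => [->|hb]; first by rewrite invr0 mulr0 ler01.
by rewrite ler_pdivrMr ?ltr0n // mul1r ler_nat.
Qed.

Lemma sqmod_sqrt_le1 (q : R) : 0 <= q -> q <= 1 -> sqmod (Num.sqrt q)%:C <= 1.
Proof. by move=> h0 h1; rewrite sqmod_real sqr_sqrtr. Qed.

Definition deg (k : I2) : nat := (k.1 + k.2)%N.
Definition beta (i : bool) (m : I2) : R :=
  Num.sqrt (((if i then m.2 else m.1).+1)%:R / ((deg m).+2)%:R).
Definition sh (i : bool) (m : I2) : I2 := if i then (m.1, m.2.+1) else (m.1.+1, m.2).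

Definition Bs (z : J -> C) (m : I2) : C :=
  (beta false m)%:C * z (false, sh false m) + (beta true m)%:C * z (true, sh true m).
Definition Bop (y : I2 -> C) (j : J) : C :=
  match j with
  | (false, (n.+1, k2)) => (beta false (n, k2))%:C * y (n, k2)
  | (true, (k1, n.+1)) => (beta true (k1, n))%:C * y (k1, n)
  | _ => 0
  end.
Definition P (z : J -> C) : J -> C := Bop (Bs z).

Lemma beta_ge0 i m : 0 <= beta i m.
Proof. exact: sqrtr_ge0. Qed.

Lemma beta_sq i m : sqmod (beta i m)%:C <= 1.
Proof.
apply: sqmod_sqrt_le1; first exact: ratio_ge0.
apply: ratio_le1; case: i; rewrite /deg; case: m => a b /=; rewrite -!addnS ?addSn;
  lia.
Qed.

Lemma beta_sum m : beta false m * beta false m + beta true m * beta true m = 1.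
Proof.
rewrite -!expr2 !sqr_sqrtr ?ratio_ge0 // -mulrDl -natrD /deg.
case: m => a b /=; rewrite addSn addnS -addSn -addnS.
by rewrite divff // pnatr_eq0.
Qed.

Lemma Bs_Bop y : Bs (Bop y) = y.
Proof.
apply: funext => -[a b]; rewrite /Bs /=.
rewrite !mulrA -!rmorphM -mulrDl -rmorphD.
by have := beta_sum (a, b) => /= ->; rewrite mul1r.
Qed.

Lemma P_idem z : P (P z) = P z.
Proof. by rewrite /P Bs_Bop. Qed.

Lemma Bop_add y1 y2 : Bop (fun m => y1 m + y2 m) = (fun j => Bop y1 j + Bop y2 j).
Proof.
by apply: funext => -[[] [[|a] [|b]]] /=; rewrite ?addr0 ?mulrDr.
Qed.

Lemma Bs_add z1 z2 : Bs (fun j => z1 j + z2 j) = (fun m => Bs z1 m + Bs z2 m).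
Proof. by apply: funext => m; rewrite /Bs; ring. Qed.

Lemma P_add z1 z2 : P (fun j => z1 j + z2 j) = (fun j => P z1 j + P z2 j).
Proof. by rewrite /P Bs_add Bop_add. Qed.

Lemma Bs_mul (phi : nat -> C) z :
  Bs (fun j => phi (deg j.2) * z j) = (fun m => phi (deg m).+1 * Bs z m).
Proof.
apply: funext => -[a b]; rewrite /Bs /deg /= addSn addnS; ring.
Qed.

Lemma Bop_mul (phi : nat -> C) y :
  Bop (fun m => phi (deg m).+1 * y m) = (fun j => phi (deg j.2) * Bop y j).
Proof.
apply: funext => -[[] [[|a] [|b]]] /=; rewrite /deg /= ?mulr0 ?addSn ?addnS //; ring.
Qed.

Lemma P_mul (phi : nat -> C) z :
  P (fun j => phi (deg j.2) * z j) = (fun j => phi (deg j.2) * P z j).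
Proof. by rewrite /P Bs_mul Bop_mul. Qed.


Lemma NconjE (v : C) : Num.conj v = (v^*)%C. Proof. by []. Qed.
Lemma conjRM (r : R) (v : C) : Num.conj (r%:C * v) = r%:C * Num.conj v.
Proof. by rewrite !NconjE; case: v => p q; simpc. Qed.
Lemma conjD (u v : C) : Num.conj (u + v) = Num.conj u + Num.conj v.
Proof. by rewrite !NconjE; case: u => p q; case: v => p' q'; simpc. Qed.

Definition T1s (y : I2 -> C) (m : I2) : C :=
  (Num.sqrt ((m.1.+1)%:R / (m.1.+1 + m.2)%:R))%:C * y (m.1.+1, m.2).
Definition T2s (y : I2 -> C) (m : I2) : C :=
  (Num.sqrt ((m.2.+1)%:R / (m.1 + m.2.+1)%:R))%:C * y (m.1, m.2.+1).

Lemma adj1 : adjoint (@DA1 R) T1s.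
Proof.
split.
  apply: bnd_bounded.
  have := @bnd_ws R I2 I2 (fun m => (Num.sqrt ((m.1.+1)%:R / (m.1.+1 + m.2)%:R))%:C)
     (fun m => (m.1.+1, m.2)).
  apply.
    by move=> m; apply: sqmod_sqrt_le1; [exact: ratio_ge0 | apply: ratio_le1; exact: leq_addr].
  by move=> [a b] [c d] _ _ [-> ->].
move=> x y _ _; rewrite !ipE.
rewrite (@csum_reindex _ _ _ (fun m : I2 => (m.1.+1, m.2))); last 2 first.
- by move=> [a b] [c d] [-> ->].
- move=> [[|a] b] h; first by rewrite /DA1 /= mul0r.
  by exfalso; apply: h; exists (a, b).
congr csum; apply: funext => -[a b]; rewrite /DA1 /T1s conjRM /=; ring.
Qed.

Lemma adj2 : adjoint (@DA2 R) T2s.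
Proof.
split.
  apply: bnd_bounded.
  have := @bnd_ws R I2 I2 (fun m => (Num.sqrt ((m.2.+1)%:R / (m.1 + m.2.+1)%:R))%:C)
     (fun m => (m.1, m.2.+1)).
  apply.
    by move=> m; apply: sqmod_sqrt_le1; [exact: ratio_ge0 | apply: ratio_le1; exact: leq_addl].
  by move=> [a b] [c d] _ _ [-> ->].
move=> x y _ _; rewrite !ipE.
rewrite (@csum_reindex _ _ _ (fun m : I2 => (m.1, m.2.+1))); last 2 first.
- by move=> [a b] [c d] [-> ->].
- move=> [a [|b]] h; first by rewrite /DA2 /= mul0r.
  by exfalso; apply: h; exists (a, b).
congr csum; apply: funext => -[a b]; rewrite /DA2 /T2s conjRM /=; ring.
Qed.

Lemma bnd_mul (K : choiceType) (c : K -> C) : (forall k, sqmod (c k) <= 4) ->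
  bnd (fun y k => c k * y k).
Proof.
move=> hc.
have h2 : (fun (y : K -> C) k => c k * y k) =
    (fun y k => (fun y k => (c k * (1/2 : R)%:C) * y k) y k + (fun y k => (c k * (1/2 : R)%:C) * y k) y k).
  apply: funext => y; apply: funext => k /=.
  have -> : c k * (1 / 2 : R)%:C * y k + c k * (1 / 2 : R)%:C * y k =
     c k * y k * ((1/2 : R) + (1/2 : R))%:C by rewrite rmorphD; ring.
  have -> : (1/2 : R) + 1/2 = 1 by field.
  by rewrite (_ : (1 : R)%:C = 1) // mulr1.
rewrite h2; apply: bnd_add; apply: (@bnd_ws _ _ _ _ (fun k => k)) => //;
  move=> k; rewrite sqmodM sqmod_real; have := hc k; have := sqmod_ge0 (c k).
  by move=> *; rewrite expr2; lra.
by move=> *; rewrite expr2; lra.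
Qed.

Lemma bnd_Bs : bnd Bs.
Proof.
have h0 := @bnd_ws R I2 J (fun m => (beta false m)%:C) (fun m => (false, sh false m))
   (fun m => beta_sq false m).
have h1 := @bnd_ws R I2 J (fun m => (beta true m)%:C) (fun m => (true, sh true m))
   (fun m => beta_sq true m).
have := bnd_add (h0 _) (h1 _); apply.
  by move=> [a b] [c d] _ _ [-> ->].
by move=> [a b] [c d] _ _ [-> ->].
Qed.

Definition c0 (j : J) : C := if j.1 then 0 else
  (if j.2.1 is n.+1 then (beta false (n, j.2.2))%:C else 0).
Definition c1 (j : J) : C := if j.1 then
  (if j.2.2 is n.+1 then (beta true (j.2.1, n))%:C else 0) else 0.

Lemma BopE : Bop = (fun y j => c0 j * y (j.2.1.-1, j.2.2) + c1 j * y (j.2.1, j.2.2.-1)).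
Proof.
apply: funext => y; apply: funext => -[[] [[|a] [|b]]]; rewrite /c0 /c1 /= ?mul0r ?addr0 ?add0r //.
Qed.

Lemma sqmod0' : sqmod (0 : C) <= 1.
Proof. by rewrite sqmod0. Qed.

Lemma bnd_Bop : bnd Bop.
Proof.
rewrite BopE.
have h0 := @bnd_ws R J I2 c0 (fun j => (j.2.1.-1, j.2.2)).
have h1 := @bnd_ws R J I2 c1 (fun j => (j.2.1, j.2.2.-1)).
have := bnd_add (h0 _ _) (h1 _ _); apply.
- by move=> [[] [[|a] b]]; rewrite /c0 /= ?sqmod0' ?beta_sq.
- by move=> [[] [[|a] b]] [[] [[|c] d]]; rewrite /c0 /= ?eqxx // => _ _ [-> ->].
- by move=> [[] [a [|b]]]; rewrite /c1 /= ?sqmod0' ?beta_sq.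
- by move=> [[] [a [|b]]] [[] [c [|d]]]; rewrite /c1 /= ?eqxx // => _ _ [-> ->].
Qed.

End Concrete.
Arguments P {R} z _.
Arguments Bs {R} z _.
Arguments Bop {R} y _.
Arguments T1s {R} y _.
Arguments T2s {R} y _.
Section Sq.
Variable R : realType.
Local Notation C := R[i].
Local Notation J := (bool * I2)%type.

Definition dd (n : nat) : R := (Num.sqrt (n.+1)%:R)^-1.
Definition ee (n : nat) : R := (Num.sqrt (n.+2)%:R - 1) * dd n.
Definition rr (n : nat) : R := Num.sqrt ((n.+1)%:R / n%:R).

Definition SL (z : J -> C) (j : J) : C :=
  (dd (deg j.2))%:C * z j + (ee (deg j.2))%:C * P z j.
Definition SR (z : J -> C) (j : J) : C := (rr (deg j.2))%:C * P z j.

Lemma sqrt_ge1 (x : R) : 1 <= x -> 1 <= Num.sqrt x.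
Proof. by move=> h; rewrite -(sqrtr1 R); apply: ler_wsqrtr. Qed.

Lemma sqrt_sq (x : R) : 0 <= x -> Num.sqrt x * Num.sqrt x = x.
Proof. by move=> h; rewrite -expr2 sqr_sqrtr. Qed.

Lemma dd_facts n : [/\ 0 <= dd n, dd n * dd n = (n.+1%:R)^-1 &
   dd n * Num.sqrt (n.+1)%:R = 1].
Proof.
have hs : 1 <= Num.sqrt (n.+1%:R : R) by apply: sqrt_ge1; rewrite ler1n.
have hs0 : Num.sqrt (n.+1%:R : R) != 0 by apply: lt0r_neq0; lra.
split.
- by rewrite /dd invr_ge0 sqrtr_ge0.
- by rewrite /dd -invfM sqrt_sq // ler0n.
- by rewrite /dd mulVf.
Qed.

Lemma dd_le1 n : dd n <= 1.
Proof.
have [h0 _ h1] := dd_facts n.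
have hs : 1 <= Num.sqrt (n.+1%:R : R) by apply: sqrt_ge1; rewrite ler1n.
nra.
Qed.

Lemma ee_facts n : 0 <= ee n /\ ee n <= 1.
Proof.
have [h0 _ h1] := dd_facts n.
have hs1 : 1 <= Num.sqrt (n.+1%:R : R) by apply: sqrt_ge1; rewrite ler1n.
have hs2 : 1 <= Num.sqrt (n.+2%:R : R) by apply: sqrt_ge1; rewrite ler1n.
have e1 := sqrt_sq (ler0n R n.+1); have e2 := sqrt_sq (ler0n R n.+2).
have e3 : (n.+2%:R : R) = n.+1%:R + 1 by rewrite natr1.
set s1 := Num.sqrt _ in hs1 e1 h1; set s2 := Num.sqrt _ in hs2 e2.
have hle : s2 <= s1 + 1 by nra.
rewrite /ee -/s2; split; nra.
Qed.

Lemma ee_id n : dd n * ee n + ee n * dd n + ee n * ee n = 1.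
Proof.
have [h0 h2 h1] := dd_facts n.
have e2 := sqrt_sq (ler0n R n.+2).
have e3 : (n.+2%:R : R) = n.+1%:R + 1 by rewrite natr1.
set s2 := Num.sqrt _ in e2.
rewrite /ee -/s2.
have -> : dd n * ((s2 - 1) * dd n) + (s2 - 1) * dd n * dd n + (s2 - 1) * dd n * ((s2 - 1) * dd n)
   = (dd n * dd n) * (s2 * s2 - 1) by ring.
rewrite e2 e3 h2 addrK mulVf // pnatr_eq0 //.
Qed.

Lemma rr_sq n : rr n * rr n <= 4.
Proof.
rewrite /rr sqrt_sq ?ratio_ge0 //.
case: n => [|n]; first by rewrite invr0 mulr0.
rewrite ler_pdivrMr ?ltr0n // -natrM ler_nat; lia.
Qed.

Lemma bnd_mulJ (phi : nat -> R) : (forall n, phi n * phi n <= 4) ->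
  bnd (fun (z : J -> C) j => (phi (deg j.2))%:C * z j).
Proof.
move=> h; apply: (@bnd_mul _ _ (fun j => (phi (deg j.2))%:C)) => j.
by rewrite sqmod_real expr2.
Qed.

Lemma bnd_mulI (phi : nat -> R) : (forall n, phi n * phi n <= 4) ->
  bnd (fun (z : I2 -> C) m => (phi (deg m).+1)%:C * z m).
Proof.
move=> h; apply: (@bnd_mul _ _ (fun m => (phi (deg m).+1)%:C)) => j.
by rewrite sqmod_real expr2.
Qed.

Lemma dd_b n : dd n * dd n <= 4.
Proof. have [h0 _ _] := dd_facts n; have := dd_le1 n; nra. Qed.
Lemma ee_b n : ee n * ee n <= 4.
Proof. have [h0 h1] := ee_facts n; nra. Qed.

Lemma bnd_P : bnd (@P R).
Proof. exact: (bnd_comp (@bnd_Bop R) (@bnd_Bs R)). Qed.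

Lemma bnd_SL : bnd SL.
Proof.
have h := bnd_add (bnd_mulJ dd_b) (bnd_comp (bnd_mulJ ee_b) bnd_P).
exact: h.
Qed.

Lemma bnd_SR : bnd SR.
Proof. exact: (bnd_comp (bnd_mulJ rr_sq) bnd_P). Qed.

Lemma ip_mul_ge0 (K : choiceType) (deg' : K -> nat) (phi : nat -> R) (z : K -> C) :
  (forall n, 0 <= phi n) -> 0 <= ip (fun j => (phi (deg' j))%:C * z j) z.
Proof.
move=> h; rewrite ipE; apply: csum_ge0 => j; rewrite -mulrA; apply: mulr_ge0.
  by rewrite ler0c.
exact: mulcJ_ge0.
Qed.

Lemma ip_Bop (y : I2 -> C) (z : J -> C) : l2 y -> l2 z -> ip (Bop y) z = ip y (Bs z).
Proof.
move=> hy hz; rewrite !ipE.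
have einj : injective (fun j : J => (j.1, sh j.1 j.2)).
  by move=> [[] [a b]] [[] [c d]] //= [-> ->].
rewrite (@csum_reindex _ _ _ _ einj); last first.
  move=> [[] [a b]] h.
    case: b h => [|b] h; first by rewrite /= mul0r.
    by exfalso; apply: h; exists (true, (a, b)).
  case: a h => [|a] h; first by rewrite /= mul0r.
  by exfalso; apply: h; exists (false, (a, b)).
rewrite csum_bool; last first.
  apply: cs_l2.
    apply: le_lt_trans (sqnorm_comp_le einj (Bop y)) _.
    exact: (bnd_l2 (@bnd_Bop R) hy).
  by apply: le_lt_trans (sqnorm_comp_le einj z) _.
congr csum; apply: funext => -[a b]; rewrite /Bs /sh /= conjD !conjRM /=; ring.
Qed.

Lemma ip_mulP_ge0 (phi : nat -> R) (z : J -> C) :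
  (forall n, 0 <= phi n) -> (forall n, phi n * phi n <= 4) -> l2 z ->
  0 <= ip (fun j => (phi (deg j.2))%:C * P z j) z.
Proof.
move=> h0 h4 hz.
have -> : (fun j => (phi (deg j.2))%:C * P z j) =
   Bop (fun m => (phi (deg m).+1)%:C * Bs z m).
  by rewrite (Bop_mul (fun n => (phi n)%:C)).
have hBs := bnd_l2 (@bnd_Bs R) hz.
rewrite ip_Bop //; last exact: (bnd_l2 (bnd_mulI h4) hBs).
exact: (@ip_mul_ge0 _ (fun m => (deg m).+1)).
Qed.

Lemma pos_SL : pos_op SL.
Proof.
split; first exact: bnd_bounded bnd_SL.
move=> z hz.
have h1 : l2 (fun j => (dd (deg j.2))%:C * z j) := bnd_l2 (bnd_mulJ dd_b) hz.
have h2 : l2 (fun j => (ee (deg j.2))%:C * P z j) :=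
  bnd_l2 (bnd_mulJ ee_b) (bnd_l2 bnd_P hz).
rewrite (_ : SL z = fun j => (dd (deg j.2))%:C * z j + (ee (deg j.2))%:C * P z j) //.
rewrite ipD //; apply: addr_ge0.
  by apply: ip_mul_ge0 => n; have [] := dd_facts n.
apply: ip_mulP_ge0 => //; [by move=> n; have [] := ee_facts n | exact: ee_b].
Qed.

Lemma pos_SR : pos_op SR.
Proof.
split; first exact: bnd_bounded bnd_SR.
move=> z hz; apply: ip_mulP_ge0 => //; [move=> n; exact: sqrtr_ge0 | exact: rr_sq].
Qed.

End Sq.
Arguments SL {R} z j.
Arguments SR {R} z j.
Section Fin.
Variable R : realType.
Local Notation C := R[i].
Local Notation J := (bool * I2)%type.

Lemma one_C : (1 : R)%:C = 1. Proof. by []. Qed.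

Lemma SL_sq (z : J -> C) : SL (SL z) = fun j => (((deg j.2).+1%:R)^-1 : R)%:C * z j + P z j.
Proof.
have hP : P (SL z) = fun j => (dd R (deg j.2) + ee R (deg j.2))%:C * P z j.
  rewrite (_ : SL z = fun j => (dd R (deg j.2))%:C * z j + (ee R (deg j.2))%:C * P z j) //.
  rewrite P_add (P_mul (fun n => (dd R n)%:C)) (P_mul (fun n => (ee R n)%:C)) P_idem.
  by apply: funext => j; rewrite rmorphD; ring.
apply: funext => j; rewrite [LHS]/SL hP /SL.
have [_ h2 _] := dd_facts R (deg j.2); have h3 := ee_id R (deg j.2).
set d := dd R (deg j.2); set e := ee R (deg j.2).
have -> : d%:C * (d%:C * z j + e%:C * P z j) + e%:C * ((d + e)%:C * P z j) =
   (d * d)%:C * z j + (d * e + e * d + e * e)%:C * P z j by rewrite rmorphD; ring.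
by rewrite h2 h3 one_C mul1r.
Qed.

Lemma SR_sq (z : J -> C) : SR (SR z) = fun j => (rr R (deg j.2) * rr R (deg j.2))%:C * P z j.
Proof.
have hP : P (SR z) = fun j => (rr R (deg j.2))%:C * P z j.
  by rewrite /SR (P_mul (fun n => (rr R n)%:C)) P_idem.
apply: funext => j; rewrite [LHS]/SR hP; ring.
Qed.

Lemma key (n m : nat) : ((n.+2)%:R / (m.+2)%:R : R) = ((m.+2)%:R)^-1 + (n.+1)%:R / (m.+2)%:R.
Proof. by rewrite -nat1r mulrDl mul1r. Qed.

Lemma Lop_eq (z : J -> C) :
  block2 (T1s \o @DA1 R) (T2s \o @DA1 R) (T1s \o @DA2 R) (T2s \o @DA2 R) z =
  fun j => (((deg j.2).+1%:R)^-1 : R)%:C * z j + P z j.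
Proof.
apply: funext => -[[] [a b]]; [case: b => [|b] | case: a => [|a]];
  rewrite /block2 /T1s /T2s /DA1 /DA2 /P /Bs /Bop /beta /deg /sh /=;
  rewrite ?addSn ?addnS ?add0n ?addn0 ?mulr0 ?addr0 ?mulrDr !mulrA -!rmorphM !sqrt_sq ?ratio_ge0 //;
  rewrite ?key ?rmorphD; ring.
Qed.

Lemma key2 (n m : nat) : (Num.sqrt (m.+2%:R / m.+1%:R) * Num.sqrt (m.+2%:R / m.+1%:R)) *
  (Num.sqrt (n.+1%:R / m.+2%:R : R) * Num.sqrt (n.+1%:R / m.+2%:R)) = n.+1%:R / m.+1%:R.
Proof.
rewrite !sqrt_sq ?ratio_ge0 //; field.
by have := ler0n R m => ?; apply/andP; split; apply: lt0r_neq0; lra.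
Qed.

Lemma sq_inj (x y : R) : 0 <= x -> 0 <= y -> x * x = y * y -> x = y.
Proof. move=> hx hy h; nra. Qed.

Lemma key3 (p q m : nat) :
  Num.sqrt (p%:R / m.+1%:R : R) * Num.sqrt (q%:R / m.+1%:R) =
  Num.sqrt (m.+2%:R / m.+1%:R) * Num.sqrt (m.+2%:R / m.+1%:R) *
  Num.sqrt (p%:R / m.+2%:R) * Num.sqrt (q%:R / m.+2%:R).
Proof.
apply: sq_inj.
- by rewrite mulr_ge0 // sqrtr_ge0.
- by rewrite !mulr_ge0 // sqrtr_ge0.
set x1 := Num.sqrt (p%:R / m.+1%:R); set x2 := Num.sqrt (q%:R / m.+1%:R).
set t := Num.sqrt (m.+2%:R / m.+1%:R).
set y1 := Num.sqrt (p%:R / m.+2%:R); set y2 := Num.sqrt (q%:R / m.+2%:R).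
have -> : x1 * x2 * (x1 * x2) = (x1 * x1) * (x2 * x2) by ring.
have -> : t * t * y1 * y2 * (t * t * y1 * y2) = (t * t) * (t * t) * (y1 * y1) * (y2 * y2) by ring.
rewrite /x1 /x2 /t /y1 /y2 !sqrt_sq ?ratio_ge0 //; field.
by have := ler0n R m => ?; apply/andP; split; apply: lt0r_neq0; lra.
Qed.

Lemma Rop_eq (z : J -> C) :
  block2 (@DA1 R \o T1s) (@DA1 R \o T2s) (@DA2 R \o T1s) (@DA2 R \o T2s) z =
  fun j => (rr R (deg j.2) * rr R (deg j.2))%:C * P z j.
Proof.
apply: funext => -[[] [a b]]; [case: b => [|b] | case: a => [|a]];
  rewrite /block2 /T1s /T2s /DA1 /DA2 /P /Bs /Bop /beta /deg /sh /rr /=;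
  rewrite ?addSn ?addnS ?add0n ?addn0 ?mulr0 ?mul0r ?addr0 ?mulrDr ?mulrA -?rmorphM //;
  by rewrite -!key3.
Qed.

End Fin.
Section Main.
Variable R : realType.
Local Notation C := R[i].
Local Notation J := (bool * I2)%type.

Lemma csum_2pt (K : choiceType) (a b : K) (h : K -> C) : a != b ->
  (forall k, k != a -> k != b -> h k = 0) -> csum h = h a + h b.
Proof.
move=> ab H.
have -> : h = fun k => (if k == a then h k else 0) + (if k == b then h k else 0).
  apply: funext => k; case: (eqVneq k a) => [->|ka]; first by rewrite (negbTE ab) addr0.
  by case: (eqVneq k b) => [->|kb]; rewrite ?add0r ?addr0 // H.
rewrite csumD; first last.
- by apply: (cs_pt (a := b)) => k /eqP /negbTE ->.
- by apply: (cs_pt (a := a)) => k /eqP /negbTE ->.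
rewrite (csum_pt (a := a)); last by move=> k /eqP /negbTE ->.
rewrite (csum_pt (a := b)); last by move=> k /eqP /negbTE ->.
by rewrite !eqxx (negbTE ab) eq_sym (negbTE ab) addr0 add0r.
Qed.

Definition z0 (j : J) : C :=
  match j with
  | (false, (S O, O)) => 1
  | (true, (O, S O)) => 1
  | _ => 0
  end.

Lemma sqmod1 : sqmod (1 : C) = 1.
Proof. by rewrite /sqmod /= expr1n expr0n /= addr0. Qed.

Lemma l2_z0 : l2 z0.
Proof.
rewrite /l2 /sqnorm.
have -> : (fun k => (sqmod (z0 k))%:E) = (fun k => (((if k == (false, (1, 0))%N then 1 else 0) +
     (if k == (true, (0, 1))%N then 1 else 0) : R))%:E).
  apply: funext => -[[] [[|[|a]] [|[|b]]]]; rewrite /z0 /= ?sqmod0 ?sqmod1 //=; by rewrite ?addr0 ?add0r.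
rewrite -/(E _) E_D; [ | by move=> k; case: ifP | by move=> k; case: ifP].
rewrite (E_pt (a := (false, (1, 0))%N)); last 2 first.
- by move=> k /eqP /negbTE ->.
- by rewrite eqxx.
rewrite (E_pt (a := (true, (0, 1))%N)); last 2 first.
- by move=> k /eqP /negbTE ->.
- by rewrite eqxx.
by rewrite -EFinD ltry.
Qed.

Lemma value_neg : dd R 1 + ee R 1 - rr R 1 < 0.
Proof.
have [h0 _ h1] := dd_facts R 1.
rewrite /ee /rr divr1.
have s2 := sqrt_sq (ler0n R 2); have s3 := sqrt_sq (ler0n R 3).
have g2 := sqrtr_ge0 (2%:R : R); have g3 := sqrtr_ge0 (3%:R : R).
set t2 := Num.sqrt _ in s2 g2 h1 *; set t3 := Num.sqrt _ in s3 g3 *.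
have h3 : t3 < 2 by nra.
have e : (dd R 1 + (t3 - 1) * dd R 1 - t2) * t2 = t3 - 2.
  have -> : (dd R 1 + (t3 - 1) * dd R 1 - t2) * t2 = t3 * (dd R 1 * t2) - t2 * t2 by ring.
  by rewrite h1 s2; ring.
have ht2 : 0 < t2 by nra.
nra.
Qed.

End Main.

Theorem theorem3p18 (R : realType) : ~ semi_hyponormal (@DA1 R) (@DA2 R).
Proof.
move=> H.
have [_ H2] := H _ _ (adj1 R) (adj2 R).
have hle : op_le (@SR R) (@SL R).
  apply: H2.
    split; first exact: pos_SL.
    by move=> z _ /=; rewrite SL_sq Lop_eq.
  split; first exact: pos_SR.
  by move=> z _ /=; rewrite SR_sq Rop_eq.
case: hle => _ hpos.
have := hpos _ (l2_z0 R).
rewrite ipE (csum_2pt (a := (false, (1, 0))%N) (b := (true, (0, 1))%N)) //; last first.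
  move=> [[] [[|[|a]] [|[|b]]]] //= _ _; by rewrite rmorph0 mulr0.
rewrite /SL /SR /P /Bop /Bs /beta /deg /sh /z0 /= !addn0 !add0n rmorph1 !mulr1.
set s := Num.sqrt _.
have hs : s * (s + s) = 1.
  by rewrite mulrDr sqrt_sq ?ratio_ge0 //; field.
rewrite [X in 0 <= X -> _](_ : _ = ((dd R 1 + ee R 1 * (s * (s + s)) - rr R 1 * (s * (s + s))) * 2)%:C); last by ring.
rewrite hs !mulr1 ler0c.
have := value_neg R; lra.
Qed.
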